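(* Let bidder $i$ have a constraint-homogeneous valuation with interest set $S$ and per-unit value $\hat v$, let $s^*=\lceil |S|/2\rceil$, and let $b_i'$ be the Core Deviation of $i$. For every strategy profile $b$, if bidder $i$ wins at least $s^*$ items of $S$ in the profile $(b_i'(b_i),b_{-i})$, then $u_i(b_i'(b_i),b_{-i};v_i)\ge \tfrac12 s^*\hat v-P_i(b)$.
   Context: Draft auction: $n$ bidders, items $[m]$; rounds are run while the set $I$ of remaining items is nonempty: each bidder submits a sealed bid $b_i\ge0$ and a set $X_i\subseteq I$; the highest bidder (ties arbitrary) gets her set (removed from $I$) and pays her bid times its size; winner, winning bid and bundle are announced. A strategy maps observed histories to actions. $u_i(b;v_i)$ is quasi-linear utility, $P_i(b)$ total payment of $i$ under $b$. Constraint-homogeneous valuation: $v(T)=\hat v|T\cap S|$. Items of $S$ are called units. For the original strategy $b_i$ (within profile $b$), $b_{it}$ denotes $i$'s bid in auction (round) $t$, $k_{it}$ the number of units she obtains in auction $t$ and $k_{i,<t}$ the number obtained before auction $t$. Core Deviation $b_i'$: let $b_i^*=\hat v/2$. In every auction $t$ she bids $\max\{b_i^*,b_{it}\}$. If she wins with bid $b_i^*$ (i.e. $b_i^*>b_{it}$), she takes $s^*-k_{i,<t}$ units of $S$ and drops out. If she wins with bid $b_{it}$, she takes exactly what she took under $b_i$ in auction $t$ (the $k_{it}$ units and any other items). She keeps bidding this way until she has acquired $s^*$ units or the remaining units are not enough to complete $s^*$ units. *)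

(* Defs.v *)
From HB Require Import structures.
From mathcomp Require Import all_boot all_order all_algebra.
Set Implicit Arguments. Unset Strict Implicit. Unset Printing Implicit Defensive.
Import Order.TTheory GRing.Theory Num.Theory.
Local Open Scope ring_scope.

Section DraftAuction.
Variables (R : realFieldType) (n m : nat).

Definition record := ('I_n * R * {set 'I_m})%type.
Definition rec_winner (r : record) : 'I_n := r.1.1.
Definition rec_bid (r : record) : R := r.1.2.
Definition rec_bundle (r : record) : {set 'I_m} := r.2.

(* Observed (public) history: the announced results of past rounds. *)
Definition history := seq record.

Definition remaining (h : history) : {set 'I_m} :=
  ~: \bigcup_(r <- h) rec_bundle r.

Definition won (j : 'I_n) (h : history) : {set 'I_m} :=
  \bigcup_(r <- h | rec_winner r == j) rec_bundle r.

Definition paid (j : 'I_n) (h : history) : R :=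
  \sum_(r <- h | rec_winner r == j) rec_bid r * (#|rec_bundle r|)%:R.

Definition action := (R * {set 'I_m})%type.
Definition strategy := history -> action.
Definition profile := 'I_n -> strategy.

Definition valid_strategy (s : strategy) : Prop :=
  forall h, 0 <= (s h).1 /\ (s h).2 \subset remaining h /\
            (remaining h != set0 -> (s h).2 != set0).

(* Highest bidder; ties are broken in favour of the smallest index. *)
Definition high_bidder (bids : 'I_n -> R) : option 'I_n :=
  [pick j | [forall k, (bids k < bids j) || ((bids k == bids j) && (j <= k)%N)]].

Definition step (b : profile) (h : history) : history :=
  match high_bidder (fun j => (b j h).1) with
  | Some w => rcons h (w, (b w h).1, (b w h).2)
  | None => h
  end.

(* Rounds are run while I is nonempty (m rounds always suffice for
   valid profiles, since each round removes at least one item). *)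
Fixpoint run (b : profile) (fuel : nat) (h : history) : history :=
  match fuel with
  | 0 => h
  | fuel'.+1 => if remaining h == set0 then h else run b fuel' (step b h)
  end.

Definition outcome (b : profile) : history := run b m [::].

Definition payment (j : 'I_n) (b : profile) : R := paid j (outcome b).

Definition utility (j : 'I_n) (v : {set 'I_m} -> R) (b : profile) : R :=
  v (won j (outcome b)) - payment j b.

Definition chval (vhat : R) (S : {set 'I_m}) (T : {set 'I_m}) : R :=
  vhat * (#|T :&: S|)%:R.

Definition upd (b : profile) (i : 'I_n) (s : strategy) : profile :=
  fun j => if j == i then s else b j.

Definition sstar (S : {set 'I_m}) : nat := uphalf #|S|.

Definition dev_active (i : 'I_n) (S : {set 'I_m}) (h : history) : bool :=
  (#|won i h :&: S| < sstar S)%N &&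
  (sstar S - #|won i h :&: S| <= #|remaining h :&: S|)%N.

(* Core Deviation of bidder i from strategy bi.  [pick h] is the set of
   s^* - k_{i,<t} units she takes when bidding b^* = vhat/2 (any choice
   satisfying [dev_pick_ok]); [drop h] is the (irrelevant) set she submits
   with bid 0 once she has dropped out (any legal choice). *)
Definition core_deviation (i : 'I_n) (vhat : R) (S : {set 'I_m})
    (pick drop : history -> {set 'I_m}) (bi : strategy) : strategy :=
  fun h =>
    if dev_active i S h then
      if (bi h).1 < vhat / 2 then (vhat / 2, pick h) else bi h
    else (0, drop h).

Definition dev_pick_ok (i : 'I_n) (S : {set 'I_m}) (pick : history -> {set 'I_m}) : Prop :=
  forall h, dev_active i S h ->
    pick h \subset remaining h :&: S /\ #|pick h| = (sstar S - #|won i h :&: S|)%N.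

Definition dev_drop_ok (drop : history -> {set 'I_m}) : Prop :=
  forall h, drop h \subset remaining h /\ (remaining h != set0 -> drop h != set0).

End DraftAuction.

(* Main.v *)
Require Import Defs.
From HB Require Import structures.
From mathcomp Require Import all_boot all_order all_algebra.
From mathcomp Require Import zify ring lra.
From Stdlib Require Import FunctionalExtensionality.
Import Order.TTheory GRing.Theory Num.Theory.
Local Open Scope ring_scope.
Set Implicit Arguments. Unset Strict Implicit.

Section L.
Variables (R : realFieldType) (n m : nat).
Implicit Types (h : history R n m) (r : record R n m).

Lemma paid_rcons j h r : paid j (rcons h r) =
  paid j h + (if rec_winner r == j then rec_bid r * (#|rec_bundle r|)%:R else 0).
Proof. by rewrite /paid big_rcons. Qed.

Lemma won_rcons j h r : won j (rcons h r) =
  won j h :|: (if rec_winner r == j then rec_bundle r else set0).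
Proof. by rewrite /won big_rcons. Qed.

Lemma rem_rcons h r : remaining (rcons h r) = remaining h :\: rec_bundle r.
Proof. by rewrite /remaining big_rcons /= setCU setDE. Qed.

Lemma won_sub_used j h : won j h \subset ~: remaining h.
Proof.
rewrite /remaining setCK /won; elim/last_ind: h => [|h r IH].
  by rewrite !big_nil sub0set.
rewrite !big_rcons /=; case: ifP => _; last by rewrite setU0 (subset_trans IH) // subsetUl.
by apply: setUSS.
Qed.

Definition Pb (bids : 'I_n -> R) (j : 'I_n) :=
  [forall k, (bids k < bids j) || ((bids k == bids j) && (j <= k)%N)].

Lemma Pb_uniq bids j j' : Pb bids j -> Pb bids j' -> j = j'.
Proof.
move=> /forallP/(_ j') H1 /forallP/(_ j) H2.
case/orP: H1 => [lt1|/andP[/eqP e1 le1]]; case/orP: H2 => [lt2|/andP[/eqP e2 le2]].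
- by move: (lt_trans lt1 lt2); rewrite ltxx.
- by move: lt1; rewrite e2 ltxx.
- by move: lt2; rewrite e1 ltxx.
- by apply/val_inj/eqP; rewrite eqn_leq le1 le2.
Qed.

Lemma Pb_ex bids (i0 : 'I_n) : exists j, Pb bids j.
Proof.
case: (@arg_maxP _ R _ i0 predT bids isT) => j0 _ Hmax.
set A := [pred j | bids j == bids j0].
have A0 : A j0 by rewrite /A /= eqxx.
case: (@arg_minnP _ j0 A (fun j => nat_of_ord j) A0) => j1 /eqP A1 Hmin.
exists j1; apply/forallP => k.
have : bids k <= bids j0 by exact: Hmax. rewrite le_eqVlt => /orP[/eqP e|lt].
  apply/orP; right; rewrite A1 -e eqxx /=; apply: Hmin; by rewrite /A /= e.
by rewrite A1 lt.
Qed.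

Lemma hb_Some bids w : Pb bids w -> high_bidder bids = Some w.
Proof.
move=> Hw; rewrite /high_bidder; case: pickP => [j Hj|H].
  by congr Some; apply: Pb_uniq Hj Hw.
by move: (H w); rewrite -/(Pb bids w) Hw.
Qed.

Lemma hb_spec bids (i0 : 'I_n) : exists w, high_bidder bids = Some w /\ Pb bids w.
Proof. have [w Hw] := Pb_ex bids i0. by exists w; split => //; apply: hb_Some. Qed.

From mathcomp Require Import zify.
Lemma card_pot (T : finType) (W Rm B S X : {set T}) :
  X \subset B -> B \subset Rm ->
  (#|(W :|: X) :&: S| + #|(Rm :\: B) :&: S| <= #|W :&: S| + #|Rm :&: S|)%N.
Proof.
move=> XB BR.
have h1 : (#|(W :|: X) :&: S| <= #|W :&: S| + #|X :&: S|)%N.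
  by rewrite setIUl cardsU leq_subr.
have h2 : (#|X :&: S| <= #|B :&: S|)%N by apply: subset_leq_card; apply: setSI.
have h3 := cardsID B (Rm :&: S).
have e1 : Rm :&: S :&: B = B :&: S.
  apply/setP=> x; rewrite !inE; case xB: (x \in B); last by rewrite !andbF.
  by rewrite (subsetP BR x xB) andbT.
have e2 : Rm :&: S :\: B = (Rm :\: B) :&: S.
  by apply/setP=> x; rewrite !inE; case: (x \in B); case: (x \in S); case: (x \in Rm).
rewrite e1 e2 in h3. lia.
Qed.

Lemma Pb_transfer (bids bids' : 'I_n -> R) (i w : 'I_n) :
  w != i -> (forall j, j != i -> bids' j = bids j) -> bids i <= bids' i ->
  Pb bids' w -> Pb bids w.
Proof.
move=> wi Eo le /forallP H; apply/forallP => k.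
have Ew : bids' w = bids w by apply: Eo.
case: (eqVneq k i) => [->|ki]; last by have := H k; rewrite Eo // Ew.
have := H i; rewrite Ew.
case Hl: (bids i < bids w); first by [].
move/negbT: Hl; rewrite -leNgt => gew /=.
case/orP=> [lt|/andP[/eqP e wle]].
  by move: (le_lt_trans (le_trans gew le) lt); rewrite ltxx.
have eiw : bids i = bids w by apply/eqP; rewrite eq_le gew andbT -e.
by rewrite eiw eqxx wle.
Qed.

Lemma step_form (bb : profile R n m) (i0 : 'I_n) h :
  exists w, step bb h = rcons h (w, (bb w h).1, (bb w h).2) /\ Pb (fun j => (bb j h).1) w.
Proof.
have [w [E Pw]] := hb_spec (fun j => (bb j h).1) i0.
by exists w; split => //; rewrite /step E.
Qed.

Lemma step_eq (b1 b2 : profile R n m) h : (forall j, b1 j h = b2 j h) -> step b1 h = step b2 h.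
Proof.
move=> E.
have -> : step b1 h = step (fun j _ => b1 j h) h by [].
have -> : step b2 h = step (fun j _ => b2 j h) h by [].
have -> // : (fun j (_ : history R n m) => b1 j h) = (fun j _ => b2 j h).
by apply: functional_extensionality => j; apply: functional_extensionality => _; apply: E.
Qed.

Lemma mono (bb : profile R n m) (i : 'I_n) (Hnn : forall j h, 0 <= (bb j h).1) f h :
  paid i h <= paid i (run bb f h).
Proof.
elim: f h => [h|f IH h] /=; first exact: lexx.
case: ifP => _; first exact: lexx.
have [w [-> _]] := step_form bb i h.
apply: le_trans (IH _); rewrite paid_rcons; case: eqP => _; rewrite ?addr0 //.
by rewrite lerDl; apply: mulr_ge0; [exact: Hnn | exact: ler0n].
Qed.

Section M.
Variables (i : 'I_n) (S : {set 'I_m}) (vhat : R) (pick drop : history R n m -> {set 'I_m})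
  (b : profile R n m).
Hypotheses (vh0 : 0 <= vhat) (Hv : forall j, valid_strategy (b j))
  (Hpick : dev_pick_ok i S pick) (Hdrop : dev_drop_ok drop).

Let D := core_deviation i vhat S pick drop (b i).
Let b' := upd b i D.

Lemma bstar0 : 0 <= vhat / 2. Proof. by rewrite divr_ge0. Qed.

Lemma valid' j h : 0 <= (b' j h).1 /\ (b' j h).2 \subset remaining h.
Proof.
rewrite /b' /upd; case: eqP => _; last by have [? [? _]] := Hv j h.
rewrite /D /core_deviation; case: ifP => Ha.
  case: ifP => _ /=; last by have [? [? _]] := Hv i h.
  split; first exact: bstar0.
  by have [P1 _] := Hpick Ha; apply: subset_trans P1 (subsetIl _ _).
by split => //; have [? _] := Hdrop h.
Qed.

Lemma persist h (w : 'I_n) (x : R) (B : {set 'I_m}) : ~~ dev_active i S h -> B \subset remaining h ->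
  ~~ dev_active i S (rcons h (w, x, B)).
Proof.
move=> Hn BR; move: Hn; rewrite /dev_active won_rcons rem_rcons (_ : rec_winner (w,x,B) = w) // (_ : rec_bundle (w,x,B) = B) //.
have pot := @card_pot _ (won i h) (remaining h) B S (if w == i then B else set0)
  ltac:(by case: (w == i); [exact: subxx | exact: sub0set]) BR.
have mon : (#|won i h :&: S| <= #|(won i h :|: (if w == i then B else set0)) :&: S|)%N.
  by apply: subset_leq_card; apply: setSI; apply: subsetUl.
move=> H; apply/negP => /andP[a1 a2]; move/negP: H; apply; apply/andP; split; lia.
Qed.

Lemma L_inact f h : ~~ dev_active i S h -> paid i (run b' f h) = paid i h.
Proof.
elim: f h => //= f IH h Hn; case: ifP => _ //.
have [w [-> _]] := step_form b' i h.
have [_ sub] := valid' w h.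
rewrite IH; last exact: persist.
rewrite paid_rcons (_ : rec_winner (w, (b' w h).1, (b' w h).2) = w) //; case: eqP => [e|_]; last by rewrite addr0.
subst w; rewrite /rec_bid /=.
by rewrite /b' /upd eqxx /D /core_deviation (negbTE Hn) /= mul0r addr0.
Qed.

Lemma Hnnb j h : 0 <= (b j h).1. Proof. by have [] := Hv j h. Qed.

Lemma L_sync f h :
  paid i (run b' f h) <= paid i (run b f h) + vhat / 2 * (sstar S)%:R.
Proof.
have c0 : 0 <= vhat / 2 * (sstar S)%:R by rewrite mulr_ge0 // bstar0.
elim: f h => [|f IH] h; first by rewrite /= lerDl.
have mb := mono i Hnnb f.+1 h.
case Hr: (remaining h == set0); first by rewrite /= Hr lerDl.
case Ha: (dev_active i S h); last first.
  rewrite L_inact ?Ha //; apply: le_trans mb _; by rewrite lerDl.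
rewrite /= Hr.
case Hlt: ((b i h).1 < vhat / 2); last first.
  rewrite (@step_eq b' b) //.
  move=> j; rewrite /b' /upd; case: eqP => [->|//].
  by rewrite /D /core_deviation Ha Hlt.
have [w [Es Pw]] := step_form b' i h.
have Ei : b' i h = (vhat / 2, pick h) by rewrite /b' /upd eqxx /D /core_deviation Ha Hlt.
case: (eqVneq w i) => [ewi|wi]; last first.
  have Pw' : Pb (fun j => (b j h).1) w.
    apply: (Pb_transfer wi _ _ Pw).
      by move=> j ji; rewrite /b' /upd (negbTE ji).
    by rewrite Ei /=; apply: ltW.
  have Es2 : step b h = rcons h (w, (b w h).1, (b w h).2) by rewrite /step (hb_Some Pw').
  have Ebw : b' w = b w by rewrite /b' /upd (negbTE wi).
  by rewrite Es Es2 Ebw; apply: IH.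
subst w; rewrite Es Ei /=.
have [Psub Pcard] := Hpick Ha.
rewrite L_inact; last first.
  rewrite /dev_active won_rcons eqxx /= negb_and; apply/orP; left; rewrite -leqNgt.
  have disj : (won i h :&: S) :&: pick h = set0.
    apply/setP => x; rewrite !inE.
    case xP: (x \in pick h); rewrite ?andbF // ?andbT.
    have : x \in remaining h :&: S by apply: (subsetP Psub).
    rewrite inE => /andP[xr _].
    case xw: (x \in won i h) => //.
    by move: (subsetP (won_sub_used i h) x xw); rewrite inE xr.
  have e : (won i h :|: pick h) :&: S = (won i h :&: S) :|: pick h.
    rewrite setIUl; congr (_ :|: _); apply/setIidPl.
    by apply: subset_trans Psub (subsetIr _ _).
  rewrite e cardsU disj cards0 subn0 Pcard.
  move/andP: Ha => [Ha1 _]; lia.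
rewrite paid_rcons eqxx /= Pcard.
have := mb.
rewrite /= Hr => mb'.
apply: lerD => //; apply: ler_wpM2l; first exact: bstar0.
by rewrite ler_nat leq_subr.
Qed.

End M.
End L.

Theorem mainTheorem7 (R : realFieldType) (n m : nat) (i : 'I_n)
    (S : {set 'I_m}) (vhat : R) (pick drop : history R n m -> {set 'I_m})
    (b : profile R n m) :
  0 <= vhat ->
  (forall j, valid_strategy (b j)) ->
  dev_pick_ok i S pick ->
  dev_drop_ok drop ->
  (sstar S <= #|won i (outcome (upd b i (core_deviation i vhat S pick drop (b i)))) :&: S|)%N ->
  utility i (chval vhat S) (upd b i (core_deviation i vhat S pick drop (b i)))
    >= (sstar S)%:R * vhat / 2 - payment i b.
Proof.
move=> vh0 Hv Hp Hd Hk.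
have L := L_sync vh0 Hv Hp Hd m [::].
rewrite /utility /chval /payment /outcome in Hk *.
set k := #|_ :&: S| in Hk *.
set P' := paid _ _ in L *.
set P := paid i (run b m [::]) in L *.
have hk : vhat * (sstar S)%:R <= vhat * k%:R by rewrite ler_wpM2l // ler_nat.
set s := (sstar S)%:R in L hk *.
set vk := vhat * k%:R in hk *.
have -> : s * vhat / 2 = vhat * s - vhat / 2 * s by field.
lra.
Qed.
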